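(* The assignment $r_1\mapsto R_1R_6$, $r_2\mapsto R_3R_5$, $r_3\mapsto R_4$, $r_4\mapsto R_2$, $e_1\mapsto E_1E_6$, $e_2\mapsto E_3E_5$, $e_3\mapsto E_4$, $e_4\mapsto E_2$ extends to a homomorphism of unital $\mathbb Z[\delta^{\pm1}]$-algebras $\phi:\mathrm{Br}(\mathrm{F}_4)\to\mathrm{Br}(\mathrm{E}_6)$.
   Context: Let $\delta$ be an indeterminate. $\mathrm{Br}(\mathrm{F}_4)$ is the unital associative $\mathbb Z[\delta^{\pm1}]$-algebra generated by $r_1,r_2,r_3,r_4,e_1,e_2,e_3,e_4$ subject to the relations: $r_i^2=1$ and $r_ie_i=e_ir_i=e_i$ for all $i$; $e_i^2=\delta e_i$ for $i\in\{3,4\}$; $e_i^2=\delta^2e_i$ for $i\in\{1,2\}$; for $\{i,j\}\in\{\{1,3\},\{1,4\},\{2,4\}\}$: $r_ir_j=r_jr_i$, $e_ir_j=r_je_i$, $e_ie_j=e_je_i$; for $(i,j)\in\{(1,2),(2,1),(3,4),(4,3)\}$: $r_ir_jr_i=r_jr_ir_j$, $r_jr_ie_j=e_ie_j$, $r_ie_jr_i=r_je_ir_j$; and $r_2r_3r_2r_3=r_3r_2r_3r_2$, $r_2r_3e_2=r_3e_2$, $r_2e_3r_2e_3=e_3e_2e_3$, $(r_2r_3r_2)e_3=e_3(r_2r_3r_2)$, $e_2r_3e_2=\delta e_2$, $e_2e_3e_2=\delta e_2$, $e_2r_3r_2=e_2r_3$, $e_2e_3r_2=e_2e_3$. The Brauer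 algebra $\mathrm{Br}(\mathrm{E}_6)$ is the unital $\mathbb Z[\delta^{\pm1}]$-algebra generated by $R_1,\dots,R_6,E_1,\dots,E_6$, where the nodes $1,\dots,6$ form the $\mathrm{E}_6$ Dynkin diagram with edges $1-3$, $3-4$, $4-5$, $5-6$, $2-4$, subject to: $R_i^2=1$, $R_iE_i=E_iR_i=E_i$, $E_i^2=\delta E_i$ for all $i$; for distinct non-adjacent $i,j$: $R_iR_j=R_jR_i$, $E_iR_j=R_jE_i$, $E_iE_j=E_jE_i$; for adjacent $i,j$: $R_iR_jR_i=R_jR_iR_j$, $R_jR_iE_j=E_iE_j$, $R_iE_jR_i=R_jE_iR_j$. *)

(* Defs.v *)
From HB Require Import structures.
From mathcomp Require Import all_boot all_order all_algebra.
Set Implicit Arguments. Unset Strict Implicit. Unset Printing Implicit Defensive.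
Import GRing.Theory.
Local Open Scope ring_scope.

(* A unital Z[delta^{+-1}]-algebra is a (unital) ring A together with the
   image d of delta, which is a central unit of A. *)
Definition Zdelta_algebra (A : pzRingType) (d : A) : Prop :=
  (exists di : A, d * di = 1 /\ di * d = 1) /\ (forall x : A, d * x = x * d).

Definition adjE6 (i j : nat) : bool :=
  [|| (i == 1%N) && (j == 3%N), (i == 3%N) && (j == 1%N),
      (i == 3%N) && (j == 4%N), (i == 4%N) && (j == 3%N),
      (i == 4%N) && (j == 5%N), (i == 5%N) && (j == 4%N),
      (i == 5%N) && (j == 6%N), (i == 6%N) && (j == 5%N),
      (i == 2%N) && (j == 4%N) | (i == 4%N) && (j == 2%N)].

Definition nodeE6 (i : nat) : bool := (1 <= i <= 6)%N.

Record BrE6_relations (A : pzRingType) (d : A) (R E : nat -> A) : Prop := {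
  e6_rr : forall i, nodeE6 i -> R i * R i = 1;
  e6_re : forall i, nodeE6 i -> R i * E i = E i;
  e6_er : forall i, nodeE6 i -> E i * R i = E i;
  e6_ee : forall i, nodeE6 i -> E i * E i = d * E i;
  e6_comm_rr : forall i j, nodeE6 i -> nodeE6 j -> i != j -> ~~ adjE6 i j ->
      R i * R j = R j * R i;
  e6_comm_er : forall i j, nodeE6 i -> nodeE6 j -> i != j -> ~~ adjE6 i j ->
      E i * R j = R j * E i;
  e6_comm_ee : forall i j, nodeE6 i -> nodeE6 j -> i != j -> ~~ adjE6 i j ->
      E i * E j = E j * E i;
  e6_braid : forall i j, adjE6 i j -> R i * R j * R i = R j * R i * R j;
  e6_rre : forall i j, adjE6 i j -> R j * R i * E j = E i * E j;
  e6_rer : forall i j, adjE6 i j -> R i * E j * R i = R j * E i * R j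
}.

Definition nodeF4 (i : nat) : bool := (1 <= i <= 4)%N.

Definition commF4 (i j : nat) : bool :=
  [|| (i == 1%N) && (j == 3%N), (i == 3%N) && (j == 1%N),
      (i == 1%N) && (j == 4%N), (i == 4%N) && (j == 1%N),
      (i == 2%N) && (j == 4%N) | (i == 4%N) && (j == 2%N)].

Definition simplyLacedF4 (i j : nat) : bool :=
  [|| (i == 1%N) && (j == 2%N), (i == 2%N) && (j == 1%N),
      (i == 3%N) && (j == 4%N) | (i == 4%N) && (j == 3%N)].

Record BrF4_relations (A : pzRingType) (d : A) (r e : nat -> A) : Prop := {
  f4_rr : forall i, nodeF4 i -> r i * r i = 1;
  f4_re : forall i, nodeF4 i -> r i * e i = e i;
  f4_er : forall i, nodeF4 i -> e i * r i = e i;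
  f4_ee_short : forall i, (i == 3%N) || (i == 4%N) -> e i * e i = d * e i;
  f4_ee_long : forall i, (i == 1%N) || (i == 2%N) -> e i * e i = d ^+ 2 * e i;
  f4_comm_rr : forall i j, commF4 i j -> r i * r j = r j * r i;
  f4_comm_er : forall i j, commF4 i j -> e i * r j = r j * e i;
  f4_comm_ee : forall i j, commF4 i j -> e i * e j = e j * e i;
  f4_braid : forall i j, simplyLacedF4 i j -> r i * r j * r i = r j * r i * r j;
  f4_rre : forall i j, simplyLacedF4 i j -> r j * r i * e j = e i * e j;
  f4_rer : forall i j, simplyLacedF4 i j -> r i * e j * r i = r j * e i * r j;
  f4_braid4 : r 2%N * r 3%N * r 2%N * r 3%N = r 3%N * r 2%N * r 3%N * r 2%N;
  f4_x1 : r 2%N * r 3%N * e 2%N = r 3%N * e 2%N;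
  f4_x2 : r 2%N * e 3%N * r 2%N * e 3%N = e 3%N * e 2%N * e 3%N;
  f4_x3 : (r 2%N * r 3%N * r 2%N) * e 3%N = e 3%N * (r 2%N * r 3%N * r 2%N);
  f4_x4 : e 2%N * r 3%N * e 2%N = d * e 2%N;
  f4_x5 : e 2%N * e 3%N * e 2%N = d * e 2%N;
  f4_x6 : e 2%N * r 3%N * r 2%N = e 2%N * r 3%N;
  f4_x7 : e 2%N * e 3%N * r 2%N = e 2%N * e 3%N
}.

Definition phi_r (A : pzRingType) (R : nat -> A) (i : nat) : A :=
  match i with
  | 1 => R 1%N * R 6%N
  | 2 => R 3%N * R 5%N
  | 3 => R 4%N
  | 4 => R 2%N
  | _ => 0
  end.

Definition phi_e (A : pzRingType) (E : nat -> A) (i : nat) : A :=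
  match i with
  | 1 => E 1%N * E 6%N
  | 2 => E 3%N * E 5%N
  | 3 => E 4%N
  | 4 => E 2%N
  | _ => 0
  end.

(* Main.v *)
Require Import Defs.
From HB Require Import structures.
From mathcomp Require Import all_boot all_order all_algebra.
Import GRing.Theory.
Local Open Scope ring_scope.

Section P.
Variables (A : pzRingType) (d : A) (R E : nat -> A).
Hypothesis dC : forall x, d * x = x * d.
Hypothesis H : BrE6_relations d R E.

Lemma LR {a b c : A} : a * b = c -> forall p, p * a * b = p * c.
Proof. by move=> <- p; rewrite mulrA. Qed.

Lemma LR3 {a b c r : A} : a * b * c = r -> forall p, p * a * b * c = p * r.
Proof. by move=> <- p; rewrite !mulrA. Qed.
Ltac sl h := rewrite ?mulrA; first [rewrite [in LHS](LR3 h) | rewrite [in LHS](LR h) | rewrite [in LHS]h]; rewrite ?mulrA ?mulr1 ?mul1r.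
Ltac sr h := rewrite ?mulrA; first [rewrite [in RHS](LR3 h) | rewrite [in RHS](LR h) | rewrite [in RHS]h]; rewrite ?mulrA ?mulr1 ?mul1r.
Ltac st h := rewrite ?mulrA; first [rewrite (LR h) | rewrite h]; rewrite ?mulrA ?mulr1 ?mul1r.

Lemma rr {i} : nodeE6 i -> R i * R i = 1. Proof. exact: (e6_rr H). Qed.
Lemma re {i} : nodeE6 i -> R i * E i = E i. Proof. exact: (e6_re H). Qed.
Lemma er {i} : nodeE6 i -> E i * R i = E i. Proof. exact: (e6_er H). Qed.

Section Adj.
Variables i j : nat.
Hypotheses (ni : nodeE6 i) (nj : nodeE6 j) (aij : adjE6 i j) (aji : adjE6 j i).
Lemma rre : R j * R i * E j = E i * E j. Proof. exact (e6_rre H aij). Qed.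
Lemma rre' : R i * R j * E i = E j * E i. Proof. exact (e6_rre H aji). Qed.
Lemma eee : E i * E j * E i = E i.
Proof. rewrite -rre -mulrA -rre' !mulrA (LR (rr ni)) mulr1 (rr nj) mul1r //. Qed.
Lemma rEE : R j * E i * E j = R i * E j.
Proof. by rewrite -mulrA -rre !mulrA (rr nj) mul1r. Qed.
Lemma ErR : E j * R i * R j = E j * E i.
Proof.
have h : E j * R i = R i * R j * E i * R j.
  by rewrite -!mulrA (mulrA (R j)) -(e6_rer H aij) !mulrA (rr ni) mul1r.
by rewrite h -!mulrA (rr nj) mulr1 !mulrA rre'.
Qed.
Lemma EER : E j * E i * R j = E j * R i.
Proof. by rewrite -ErR -!mulrA (rr nj) mulr1. Qed.
End Adj.
Lemma ERE i j : nodeE6 i -> nodeE6 j -> adjE6 i j -> adjE6 j i -> E i * R j * E i = E i.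
Proof.
move=> ni nj aij aji; rewrite -(EER _ _ nj ni aji aij) -!mulrA (re ni) !mulrA.
exact: eee.
Qed.
Definition AD i j := [&& nodeE6 i, nodeE6 j, adjE6 i j & adjE6 j i].
Definition NA i j := [&& nodeE6 i, nodeE6 j, i != j & ~~ adjE6 i j].
Lemma xrr i : nodeE6 i -> R i * R i = 1. Proof. exact: rr. Qed.
Lemma xre i : nodeE6 i -> R i * E i = E i. Proof. exact: re. Qed.
Lemma xer i : nodeE6 i -> E i * R i = E i. Proof. exact: er. Qed.
Lemma xee i : nodeE6 i -> E i * E i = d * E i. Proof. exact: (e6_ee H). Qed.
Lemma cRR i j : NA i j -> R i * R j = R j * R i.
Proof. by case/and4P=> *; apply: (e6_comm_rr H). Qed.
Lemma cER i j : NA i j -> E i * R j = R j * E i.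
Proof. by case/and4P=> *; apply: (e6_comm_er H). Qed.
Lemma cRE i j : NA j i -> R i * E j = E j * R i.
Proof. by move/cER. Qed.
Lemma cEE i j : NA i j -> E i * E j = E j * E i.
Proof. by case/and4P=> *; apply: (e6_comm_ee H). Qed.
Lemma xbraid i j : AD i j -> R i * R j * R i = R j * R i * R j.
Proof. by case/and4P=> *; apply: (e6_braid H). Qed.
Lemma xrer i j : AD i j -> R i * E j * R i = R j * E i * R j.
Proof. by case/and4P=> *; apply: (e6_rer H). Qed.
Lemma xrre i j : AD i j -> R j * R i * E j = E i * E j.
Proof. by case/and4P=> *; apply: rre. Qed.
Lemma xeee i j : AD i j -> E i * E j * E i = E i.
Proof. by case/and4P=> *; apply: eee. Qed.
Lemma xrEE i j : AD i j -> R j * E i * E j = R i * E j.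
Proof. by case/and4P=> *; apply: rEE. Qed.
Lemma xErR i j : AD i j -> E j * R i * R j = E j * E i.
Proof. by case/and4P=> *; apply: ErR. Qed.
Lemma xEER i j : AD i j -> E j * E i * R j = E j * R i.
Proof. by case/and4P=> *; apply: EER. Qed.
Lemma xERE i j : AD i j -> E i * R j * E i = E i.
Proof. by case/and4P=> *; exact: ERE. Qed.


Lemma braid6 {a b c f : A} : a * b = b * a -> a * f = f * a -> b * c = c * b ->
  c * f = f * c -> a * c * a = c * a * c -> b * f * b = f * b * f ->
  a * b * (c * f) * (a * b) = c * f * (a * b) * (c * f).
Proof.
move=> ab af bc cf aca bfb.
sl bc; sl (esym af); sl (esym ab); sl aca; sl bfb.
sr (esym af); sr bc; by sr (esym cf).
Qed.
Lemma braid4 {s t u : A} : s * t = t * s -> s * u * s = u * s * u -> t * u * t = u * t * u ->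
  s * t * u * (s * t) * u = u * (s * t) * u * (s * t).
Proof.
move=> st sus tut.
sl st; sl tut; sl (esym sus); sl (esym st); sl sus; sl (esym tut); by sl (esym st).
Qed.
Lemma conj_comm (w e : A) : w * w = 1 -> w * e * w = e -> w * e = e * w.
Proof. by move=> ww h; rewrite -{2}h -mulrA ww mulr1. Qed.
Ltac cmt := first [apply: commrM | apply/esym; apply: commrM];
  (first [apply: cRR | apply: cRE | apply: cER | apply: cEE]; done).

Lemma main : BrF4_relations d (phi_r R) (phi_e E).
Proof.
constructor.
- move=> [|[|[|[|[|i]]]]] //= _.
  + by sl (cRR 6 1 isT); sl (xrr 1 isT); sl (xrr 6 isT).
  + by sl (cRR 5 3 isT); sl (xrr 3 isT); sl (xrr 5 isT).
  + exact: xrr.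
  + exact: xrr.
- move=> [|[|[|[|[|i]]]]] //= _.
  + by sl (cRE 6 1 isT); sl (xre 1 isT); sl (xre 6 isT).
  + by sl (cRE 5 3 isT); sl (xre 3 isT); sl (xre 5 isT).
  + exact: xre.
  + exact: xre.
- move=> [|[|[|[|[|i]]]]] //= _.
  + by sl (cER 6 1 isT); sl (xer 1 isT); sl (xer 6 isT).
  + by sl (cER 5 3 isT); sl (xer 3 isT); sl (xer 5 isT).
  + exact: xer.
  + exact: xer.
- move=> [|[|[|[|[|i]]]]] //= _.
  + exact: xee.
  + exact: xee.
- move=> [|[|[|[|[|i]]]]] //= _.
  + sl (cEE 6 1 isT); sl (xee 1 isT); sl (xee 6 isT).
    by rewrite expr2 -!mulrA; congr (_ * _); rewrite !mulrA dC.
  + sl (cEE 5 3 isT); sl (xee 3 isT); sl (xee 5 isT).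
    by rewrite expr2 -!mulrA; congr (_ * _); rewrite !mulrA dC.
- move=> [|[|[|[|[|i]]]]] [|[|[|[|[|j]]]]] //= _; cmt.
- move=> [|[|[|[|[|i]]]]] [|[|[|[|[|j]]]]] //= _; cmt.
- move=> [|[|[|[|[|i]]]]] [|[|[|[|[|j]]]]] //= _; cmt.
- move=> [|[|[|[|[|i]]]]] [|[|[|[|[|j]]]]] //= _.
  + exact: (braid6 (cRR 1 6 isT) (cRR 1 5 isT) (cRR 6 3 isT) (cRR 3 5 isT) (xbraid 1 3 isT) (xbraid 6 5 isT)).
  + exact/esym/(braid6 (cRR 1 6 isT) (cRR 1 5 isT) (cRR 6 3 isT) (cRR 3 5 isT) (xbraid 1 3 isT) (xbraid 6 5 isT)).
  + exact: xbraid.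
  + exact: xbraid.
- move=> [|[|[|[|[|i]]]]] [|[|[|[|[|j]]]]] //= _.
  + sl (cRR 5 1 isT); sl (cRE 6 3 isT); sl (cRE 5 3 isT); sl (xrre 1 3 isT); sl (xrre 6 5 isT).
    by sl (cEE 3 6 isT).
  + sl (cRR 6 3 isT); sl (cRE 5 1 isT); sl (cRE 6 1 isT); sl (xrre 3 1 isT); sl (xrre 5 6 isT).
    by sl (cEE 1 5 isT).
  + exact: xrre.
  + exact: xrre.
- have h : R 1 * R 6 * (E 3 * E 5) * (R 1 * R 6) = R 3 * R 5 * (E 1 * E 6) * (R 3 * R 5).
    sl (cRE 6 3 isT); sl (cER 5 1 isT); sl (cRR 6 1 isT); sl (xrer 1 3 isT); sl (xrer 6 5 isT).
    sr (cRE 5 1 isT); sr (cER 6 3 isT); by sr (cRR 5 3 isT).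
  move=> [|[|[|[|[|i]]]]] [|[|[|[|[|j]]]]] //= _.
  + exact: xrer.
  + exact: xrer.
- exact: (braid4 (cRR 3 5 isT) (xbraid 3 4 isT) (xbraid 5 4 isT)).
- rewrite /=.
  sl (cRR 3 5 isT); sl (xrre 4 3 isT); sl (cEE 3 5 isT); sl (xrEE 4 5 isT).
  by sl (cEE 5 3 isT).
- rewrite /=.
  sl (cRR 3 5 isT); sl (xrer 5 4 isT); sl (xrre 3 4 isT); sl (cEE 5 3 isT).
  by sl (xrre 4 3 isT).
- rewrite /=.
  have -> : R 3 * R 5 * R 4 * (R 3 * R 5) = R 3 * R 4 * R 5 * R 4 * R 3.
    by sl (cRR 3 5 isT); sl (xbraid 5 4 isT).
  apply: conj_comm.
    sl (xrr 3 isT); sl (xrr 4 isT); sl (xrr 5 isT); sl (xrr 4 isT); by sl (xrr 3 isT).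
  sl (xrer 3 4 isT); sl (xrr 4 isT); sl (xrr 4 isT); sl (cRE 5 3 isT); sl (xrr 5 isT).
  sl (xrer 4 3 isT); sl (xrr 3 isT); by sl (xrr 3 isT).
- rewrite /=.
  sl (esym (xEER 4 5 isT)); sl (cRE 5 3 isT); sl (xre 5 isT); sl (cEE 3 5 isT).
  sl (xeee 5 4 isT); sl (cEE 5 3 isT); by sl (xee 3 isT).
- rewrite /=.
  sl (cEE 3 5 isT); sl (xeee 5 4 isT); sl (cEE 5 3 isT); by sl (xee 3 isT).
- rewrite /=.
  sl (cRR 3 5 isT); sl (xErR 4 5 isT); sl (cEE 3 5 isT); sl (xEER 4 3 isT).
  by sl (cEE 5 3 isT).
- rewrite /=.
  sl (cRR 3 5 isT); sl (xEER 4 5 isT); sl (cEE 3 5 isT); sl (xErR 4 3 isT).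
  by sl (cEE 5 3 isT).
Qed.
End P.

Theorem proposition2p3 (A : pzRingType) (d : A) (R E : nat -> A) :
  Zdelta_algebra d ->
  BrE6_relations d R E ->
  BrF4_relations d (phi_r R) (phi_e E).
Proof. by move=> [_ dC] H; apply: main. Qed.
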